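(* Let $\gamma\in[0,1)$ and $\Omega_{\gamma}=\{z\in\mathbb{C}:|z+\frac{\gamma}{1-\gamma}|<\frac{1}{1-\gamma}\}$. Suppose that $h(z)=\sum_{n=0}^\infty a_n\left(z+\frac{\gamma}{1-\gamma}\right)^n$ and $g(z)=\sum_{n=0}^\infty b_n\left(z+\frac{\gamma}{1-\gamma}\right)^n$ are analytic in $\Omega_{\gamma}$, that $|h(z)|\le 1$ in $\Omega_\gamma$, and that $|g'(z)|\le k|h'(z)|$ in $\Omega_{\gamma}$ for some $k\in[0,1)$. Then for $|(1-\gamma)z+\gamma|=\rho<1$, $$\sum_{n=1}^\infty n\frac{|b_n|^2}{(1-\gamma)^{2n}}\rho^{2n}\le k^2\sum_{n=1}^\infty n\frac{|a_n|^2}{(1-\gamma)^{2n}}\rho^{2n}\quad\text{and}\quad \sum_{n=1}^\infty \frac{|b_n|^2}{(1-\gamma)^{2n}}\rho^{n}\le k^2\sum_{n=1}^\infty \frac{|a_n|^2}{(1-\gamma)^{2n}}\rho^{n}.$$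
   Context: $\Omega_\gamma$ is the open disk centered at $-\gamma/(1-\gamma)$ of radius $1/(1-\gamma)$; it contains the unit disk $\mathbb{D}$. *)

(* Defs.v *)
From Stdlib Require Export Reals.
From Coquelicot Require Export Coquelicot.
Open Scope R_scope.

Definition cgam (gamma : R) : R := gamma / (1 - gamma).

Definition Omega (gamma : R) (z : C) : Prop :=
  Cmod (Cplus z (RtoC (cgam gamma))) < 1 / (1 - gamma).

(* Sum over n >= 1 of a nonnegative real sequence, as an extended real
   (value in [0, +oo]): the limit of the partial sums  sum_{n=1}^{N} u n. *)
Definition sum_from1 (u : nat -> R) : Rbar :=
  Lim_seq (fun N => sum_n (fun n => u (S n)) N).

(* Main.v *)
Require Import Defs.
From Stdlib Require Import Reals Lra Lia Psatz.
From Coquelicot Require Import Coquelicot.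
Open Scope R_scope.

Fixpoint cs (f : nat -> C) (n : nat) : C :=
  match n with O => RtoC 0 | S m => Cplus (cs f m) (f m) end.
Fixpoint rsum (f : nat -> R) (n : nat) : R :=
  match n with O => 0 | S m => rsum f m + f m end.

Lemma cs_ext f g n : (forall k, (k < n)%nat -> f k = g k) -> cs f n = cs g n.
Proof. induction n; intros H; simpl; auto. rewrite IHn by (intros; apply H; lia). rewrite H by lia; auto. Qed.
Lemma rsum_ext f g n : (forall k, (k < n)%nat -> f k = g k) -> rsum f n = rsum g n.
Proof. induction n; intros H; simpl; auto. rewrite IHn by (intros; apply H; lia). rewrite H by lia; auto. Qed.
Lemma rsum_le f g n : (forall k, (k < n)%nat -> f k <= g k) -> rsum f n <= rsum g n.
Proof. induction n; intros H; simpl. lra. assert (f n <= g n) by (apply H; lia). assert (rsum f n <= rsum g n) by (apply IHn; intros; apply H; lia). lra. Qed.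
Lemma rsum_scal c f n : rsum (fun k => c * f k) n = c * rsum f n.
Proof. induction n; simpl; [ring|rewrite IHn; ring]. Qed.
Lemma rsum_plus f g n : rsum (fun k => f k + g k) n = rsum f n + rsum g n.
Proof. induction n; simpl; [ring|rewrite IHn; ring]. Qed.
Lemma cs_plus f g n : cs (fun k => Cplus (f k) (g k)) n = Cplus (cs f n) (cs g n).
Proof. induction n; simpl. apply injective_projections; simpl; ring. rewrite IHn; ring. Qed.
Lemma cs_scal c f n : cs (fun k => Cmult c (f k)) n = Cmult c (cs f n).
Proof. induction n; simpl. apply injective_projections; simpl; ring. rewrite IHn; ring. Qed.
Lemma cs_zero n : cs (fun _ => RtoC 0) n = RtoC 0.
Proof. induction n; simpl; auto. rewrite IHn. apply injective_projections; simpl; ring. Qed.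
Lemma cs_swap (f : nat -> nat -> C) n m :
  cs (fun i => cs (fun j => f i j) m) n = cs (fun j => cs (fun i => f i j) n) m.
Proof.
  induction n; simpl. rewrite cs_zero; auto.
  rewrite IHn. rewrite <- cs_plus. reflexivity.
Qed.
Lemma cs_mult f g n m : Cmult (cs f n) (cs g m) = cs (fun i => cs (fun j => Cmult (f i) (g j)) m) n.
Proof.
  induction n; simpl. apply injective_projections; simpl; ring.
  rewrite <- IHn. rewrite Cmult_plus_distr_r, cs_scal. reflexivity.
Qed.
Lemma cs_conj f n : Cconj (cs f n) = cs (fun k => Cconj (f k)) n.
Proof. induction n; simpl. apply injective_projections; simpl; ring. rewrite Cplus_conj, IHn; auto. Qed.
Lemma cs_RtoC f n : RtoC (rsum f n) = cs (fun k => RtoC (f k)) n.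
Proof. induction n; simpl; auto. rewrite RtoC_plus, IHn; auto. Qed.
Lemma cs_delta f n i : (i < n)%nat -> (forall k, (k < n)%nat -> k <> i -> f k = RtoC 0) -> cs f n = f i.
Proof.
  induction n; intros Hi H. lia.
  simpl. destruct (Nat.eq_dec i n).
  - subst. rewrite (cs_ext _ (fun _ => RtoC 0)). rewrite cs_zero. apply injective_projections; simpl; ring.
    intros; apply H; lia.
  - rewrite IHn by (try lia; intros; apply H; lia). rewrite (H n) by lia. apply injective_projections; simpl; ring.
Qed.
Lemma Cpow_mult_l x y n : Cpow (Cmult x y) n = Cmult (Cpow x n) (Cpow y n).
Proof. induction n; simpl. apply injective_projections; simpl; ring. rewrite IHn; ring. Qed.
Lemma Cpow_plus x a b : Cpow x (a + b) = Cmult (Cpow x a) (Cpow x b).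
Proof. induction a; simpl. apply injective_projections; simpl; ring. rewrite IHa; ring. Qed.
Lemma Cpow_mult_r x a b : Cpow x (a * b) = Cpow (Cpow x a) b.
Proof. induction b. rewrite Nat.mul_0_r; auto. rewrite Nat.mul_succ_r, Cpow_plus, IHb. simpl. ring. Qed.
Lemma Cpow_comm x a b : Cpow (Cpow x a) b = Cpow (Cpow x b) a.
Proof. rewrite <- !Cpow_mult_r, Nat.mul_comm; auto. Qed.
Lemma Cpow_one n : Cpow (RtoC 1) n = RtoC 1.
Proof. induction n; simpl; auto. rewrite IHn; ring. Qed.
Lemma cs_const c n : cs (fun _ => c) n = Cmult (RtoC (INR n)) c.
Proof. induction n. simpl. apply injective_projections; simpl; ring. change (cs (fun _ => c) (S n)) with (Cplus (cs (fun _ => c) n) c). rewrite IHn, S_INR. apply injective_projections; simpl; ring. Qed.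
Lemma geom_sum q n : Cmult (cs (fun j => Cpow q j) n) (Cminus (RtoC 1) q) = Cminus (RtoC 1) (Cpow q n).
Proof. induction n; simpl. apply injective_projections; simpl; ring. rewrite Cmult_plus_distr_r, IHn. ring. Qed.
Lemma geom_zero q n : q <> RtoC 1 -> Cpow q n = RtoC 1 -> cs (fun j => Cpow q j) n = RtoC 0.
Proof.
  intros Hq Hn. assert (H := geom_sum q n). rewrite Hn in H.
  replace (Cminus (RtoC 1) (RtoC 1)) with (RtoC 0) in H by (apply injective_projections; simpl; ring).
  assert (Cminus (RtoC 1) q <> RtoC 0). { intro E. apply Hq. 
    replace q with (Cminus (RtoC 1) (Cminus (RtoC 1) q)) by ring. rewrite E. apply injective_projections; simpl; ring. }
  replace (cs _ n) with (Cmult (Cmult (cs (fun j => Cpow q j) n) (Cminus (RtoC 1) q)) (Cinv (Cminus (RtoC 1) q))).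
  rewrite H. ring. field. auto.
Qed.

Definition omega (N : nat) : C := (cos (2 * PI / INR N), sin (2 * PI / INR N)).

Lemma cis_pow t j : Cpow (cos t, sin t) j = (cos (INR j * t), sin (INR j * t)).
Proof.
  induction j. simpl. rewrite Rmult_0_l, cos_0, sin_0. auto.
  change (Cpow (cos t, sin t) (S j)) with (Cmult (cos t, sin t) (Cpow (cos t, sin t) j)).
  rewrite IHj, S_INR. replace ((INR j + 1) * t) with (INR j * t + t) by ring.
  apply injective_projections; simpl; [rewrite cos_plus|rewrite sin_plus]; ring.
Qed.

Lemma omega_pow N j : Cpow (omega N) j = (cos (INR j * (2 * PI / INR N)), sin (INR j * (2 * PI / INR N))).
Proof. apply cis_pow. Qed.

Lemma omega_N N : (0 < N)%nat -> Cpow (omega N) N = RtoC 1.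
Proof.
  intros HN. rewrite omega_pow. assert (0 < INR N) by (apply lt_0_INR; lia).
  replace (INR N * (2 * PI / INR N)) with (2 * PI) by (field; lra).
  rewrite cos_2PI, sin_2PI. auto.
Qed.

Lemma omega_ne1 N d : (0 < d < N)%nat -> Cpow (omega N) d <> RtoC 1.
Proof.
  intros Hd E. rewrite omega_pow in E. apply (f_equal fst) in E. simpl in E.
  assert (0 < INR d) by (apply lt_0_INR; lia).
  assert (INR d < INR N) by (apply lt_INR; lia).
  set (x := INR d * (2 * PI / INR N)) in E.
  assert (0 < x / 2 < PI). { unfold x. split.
    apply Rmult_lt_0_compat; [|lra]. apply Rmult_lt_0_compat; auto. apply Rdiv_lt_0_compat; [|lra]. pose PI_RGT_0; lra.
    replace (INR d * (2 * PI / INR N) / 2) with (PI * (INR d / INR N)) by (field; lra).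
    assert (INR d / INR N < 1). { apply (Rmult_lt_reg_r (INR N)); [lra|]. field_simplify; lra. }
    pose PI_RGT_0; nra. }
  assert (0 < sin (x/2)) by (apply sin_gt_0; lra).
  replace x with (2 * (x/2)) in E by field. rewrite cos_2a_sin in E. nra.
Qed.

Lemma omega_conj N : Cmult (Cconj (omega N)) (omega N) = RtoC 1.
Proof.
  unfold omega. apply injective_projections; simpl.
  pose proof (sin2_cos2 (2 * PI / INR N)). unfold Rsqr in H. nra. ring.
Qed.

Lemma Cconj_1 : Cconj (RtoC 1) = RtoC 1.
Proof. apply injective_projections; simpl; ring. Qed.

Lemma orth N n m : (n < N)%nat -> (m < N)%nat -> n <> m ->
  cs (fun j => Cpow (Cmult (Cpow (omega N) n) (Cpow (Cconj (omega N)) m)) j) N = RtoC 0.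
Proof.
  intros Hn Hm Hnm. apply geom_zero.
  - intro E. destruct (proj1 (Nat.lt_gt_cases n m) Hnm) as [L|L].
    + assert (Hle : (n <= m)%nat) by lia. destruct (Nat.le_exists_sub n m Hle) as [d [Hd _]]. rewrite Nat.add_comm in Hd. subst m.
      rewrite Cpow_plus in E.
      replace (Cmult (Cpow (omega N) n) (Cmult (Cpow (Cconj (omega N)) n) (Cpow (Cconj (omega N)) d)))
        with (Cmult (Cpow (Cmult (Cconj (omega N)) (omega N)) n) (Cpow (Cconj (omega N)) d)) in E
        by (rewrite Cpow_mult_l; ring).
      rewrite omega_conj, Cpow_one, Cmult_1_l, <- Cpow_conj in E.
      apply (omega_ne1 N d). lia. rewrite <- (Cconj_conj (Cpow _ d)), E. apply Cconj_1.
    + assert (Hle : (m <= n)%nat) by lia. destruct (Nat.le_exists_sub m n Hle) as [d [Hd _]]. rewrite Nat.add_comm in Hd. subst n.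
      rewrite Cpow_plus in E.
      replace (Cmult (Cmult (Cpow (omega N) m) (Cpow (omega N) d)) (Cpow (Cconj (omega N)) m))
        with (Cmult (Cpow (Cmult (Cconj (omega N)) (omega N)) m) (Cpow (omega N) d)) in E
        by (rewrite Cpow_mult_l; ring).
      rewrite omega_conj, Cpow_one, Cmult_1_l in E.
      apply (omega_ne1 N d). lia. auto.
  - rewrite Cpow_mult_l, <- !(Cpow_comm _ N), <- Cpow_conj, omega_N by lia.
    rewrite Cconj_1, !Cpow_one. apply Cmult_1_l.
Qed.

Lemma dft (al : nat -> C) N : (0 < N)%nat ->
  rsum (fun j => Cmod (cs (fun n => Cmult (al n) (Cpow (Cpow (omega N) j) n)) N) ^ 2) N
  = INR N * rsum (fun n => Cmod (al n) ^ 2) N.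
Proof.
  intros HN.
  assert (E : RtoC (rsum (fun j => Cmod (cs (fun n => Cmult (al n) (Cpow (Cpow (omega N) j) n)) N) ^ 2) N)
   = RtoC (INR N * rsum (fun n => Cmod (al n) ^ 2) N)).
  2:{ apply (f_equal fst) in E. exact E. }
  rewrite cs_RtoC, RtoC_mult, cs_RtoC, <- cs_scal.
  rewrite (cs_ext _ (fun j => cs (fun n => cs (fun m =>
       Cmult (Cmult (al n) (Cconj (al m))) (Cpow (Cmult (Cpow (omega N) n) (Cpow (Cconj (omega N)) m)) j)) N) N)).
  2:{ intros j _. rewrite Cmod2_conj, cs_conj, cs_mult. apply cs_ext; intros n _. apply cs_ext; intros m _.
      rewrite Cmult_conj, !Cpow_conj, Cpow_mult_l, (Cpow_comm (omega N) j n), (Cpow_comm (Cconj (omega N)) j m). ring. }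
  rewrite cs_swap. apply cs_ext; intros n Hn.
  rewrite cs_swap. rewrite (cs_delta _ N n Hn).
  - rewrite cs_scal. rewrite (cs_ext _ (fun _ => RtoC 1)).
    + rewrite cs_const, Cmod2_conj. ring.
    + intros j _. rewrite <- Cpow_mult_l, Cmult_comm, omega_conj, !Cpow_one. auto.
  - intros m Hm Hmn. rewrite cs_scal, orth by auto. apply Cmult_0_r.
Qed.


Definition climit (s : nat -> C) (l : C) := forall eps, 0 < eps -> exists N, forall n, (N <= n)%nat -> Cmod (Cminus (s n) l) < eps.
Definition ps (c : nat -> C) (v : C) (m : nat) : C := cs (fun n => Cmult (c n) (Cpow v n)) m.

Lemma Cmod_sym a b : Cmod (Cminus a b) = Cmod (Cminus b a).
Proof. rewrite <- Cmod_opp. f_equal. ring. Qed.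

Lemma sum_n_cs (a : nat -> C) m : sum_n a m = cs a (S m).
Proof.
  induction m. rewrite sum_O. simpl. apply injective_projections; simpl; ring.
  rewrite sum_Sn, IHm. reflexivity.
Qed.

Lemma is_series_climit (a : nat -> C) l : @is_series C_AbsRing C_NormedModule a l -> climit (cs a) l.
Proof.
  intros H0. unfold is_series in H0. pose proof (proj1 (filterlim_locally_ball_norm (K:=C_AbsRing) (U:=C_NormedModule) (F:=eventually) (sum_n a) l) H0) as H.
  intros eps He. destruct (H (mkposreal eps He)) as [N HN].
  exists (S N). intros n Hn. destruct n as [|k]. lia.
  rewrite <- sum_n_cs. specialize (HN k ltac:(lia)). unfold ball_norm in HN. simpl in HN.
  change (Cmod (Cminus (sum_n a k) l) < eps) in HN. exact HN.
Qed.

Lemma pow_n_Cpow (v : C) n : @pow_n C_Ring v n = Cpow v n.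
Proof. induction n; simpl; auto; rewrite IHn; reflexivity. Qed.

Lemma pseries_climit c v l : @is_pseries C_AbsRing C_NormedModule c v l -> climit (ps c v) l.
Proof.
  intros H. apply is_series_climit in H. intros eps He. destruct (H eps He) as [N HN].
  exists N. intros n Hn. specialize (HN n Hn). unfold ps. 
  replace (cs (fun n0 : nat => Cmult (c n0) (Cpow v n0)) n) with (cs (fun k => @scal C_AbsRing C_NormedModule (@pow_n C_Ring v k) (c k)) n). exact HN.
  apply cs_ext. intros k _. rewrite pow_n_Cpow. apply Cmult_comm.
Qed.

Lemma climit_close s l p T : climit s l -> (exists N, forall n, (N<=n)%nat -> Cmod (Cminus (s n) p) <= T) -> Cmod (Cminus l p) <= T.
Proof.
  intros H [N HN]. destruct (Rle_dec (Cmod (Cminus l p)) T) as [|Hc]; auto. exfalso.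
  assert (He : 0 < (Cmod (Cminus l p) - T)/2) by lra.
  destruct (H _ He) as [N2 HN2]. specialize (HN (max N N2) ltac:(lia)). specialize (HN2 (max N N2) ltac:(lia)).
  assert (Cmod (Cminus l p) <= Cmod (Cminus (s (max N N2)) l) + Cmod (Cminus (s (max N N2)) p)).
  { rewrite (Cmod_sym (s _) l). eapply Rle_trans; [|apply Cmod_triangle]. right. f_equal. ring. }
  lra.
Qed.

Lemma climit_scal c s l : climit s l -> climit (fun n => Cmult c (s n)) (Cmult c l).
Proof.
  intros H eps He. assert (Hc : 0 < eps / (Cmod c + 1)) by (apply Rdiv_lt_0_compat; auto; pose proof (Cmod_ge_0 c); lra).
  destruct (H _ Hc) as [N HN]. exists N. intros n Hn. specialize (HN n Hn).
  replace (Cminus (Cmult c (s n)) (Cmult c l)) with (Cmult c (Cminus (s n) l)) by ring.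
  rewrite Cmod_mult. pose proof (Cmod_ge_0 c). pose proof (Cmod_ge_0 (Cminus (s n) l)).
  apply Rle_lt_trans with ((Cmod c + 1) * Cmod (Cminus (s n) l)). nra.
  replace eps with ((Cmod c + 1) * (eps / (Cmod c + 1))) by (field; lra). apply Rmult_lt_compat_l; lra.
Qed.

Lemma climit_plus s1 s2 l1 l2 : climit s1 l1 -> climit s2 l2 -> climit (fun n => Cplus (s1 n) (s2 n)) (Cplus l1 l2).
Proof.
  intros H1 H2 eps He. destruct (H1 (eps/2) ltac:(lra)) as [N1 HN1]. destruct (H2 (eps/2) ltac:(lra)) as [N2 HN2].
  exists (max N1 N2). intros n Hn. specialize (HN1 n ltac:(lia)). specialize (HN2 n ltac:(lia)).
  replace (Cminus (Cplus (s1 n) (s2 n)) (Cplus l1 l2)) with (Cplus (Cminus (s1 n) l1) (Cminus (s2 n) l2)) by ring.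
  eapply Rle_lt_trans. apply Cmod_triangle. lra.
Qed.

Lemma climit_ext s1 s2 l : (forall n, s1 n = s2 n) -> climit s1 l -> climit s2 l.
Proof. intros E H eps He. destruct (H eps He) as [N HN]. exists N. intros n Hn. rewrite <- E. auto. Qed.

Lemma cs_norm f n : Cmod (cs f n) <= rsum (fun k => Cmod (f k)) n.
Proof.
  induction n; simpl. rewrite Cmod_0. lra.
  eapply Rle_trans. apply Cmod_triangle. lra.
Qed.

Lemma cs_split f N p : cs f (N + p) = Cplus (cs f N) (cs (fun k => f (N + k)%nat) p).
Proof.
  induction p; simpl. rewrite Nat.add_0_r. apply injective_projections; simpl; ring.
  rewrite Nat.add_succ_r. simpl. rewrite IHp. ring.
Qed.

Lemma rsum_geom M q n : 0 <= q < 1 -> 0 <= M -> rsum (fun k => M * q ^ k) n <= M / (1 - q).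
Proof.
  intros Hq HM. assert (E : rsum (fun k => M * q ^ k) n * (1 - q) = M * (1 - q ^ n)).
  { induction n; simpl. ring. rewrite Rmult_plus_distr_r, IHn. ring. }
  assert (0 <= q ^ n) by (apply pow_le; lra).
  apply (Rmult_le_reg_r (1 - q)). lra. rewrite E. field_simplify; [|lra]. nra.
Qed.

Lemma series_tail f l M q N : climit (cs f) l -> 0 <= q < 1 -> 0 <= M ->
  (forall k, Cmod (f k) <= M * q ^ k) -> Cmod (Cminus l (cs f N)) <= M * q ^ N / (1 - q).
Proof.
  intros H Hq HM Hf. apply (climit_close _ _ _ _ H). exists N. intros n Hn.
  replace n with (N + (n - N))%nat by lia. rewrite cs_split.
  replace (Cminus (Cplus (cs f N) (cs (fun k => f (N + k)%nat) (n - N))) (cs f N)) with (cs (fun k => f (N + k)%nat) (n - N)) by ring.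
  eapply Rle_trans. apply cs_norm.
  eapply Rle_trans. apply rsum_le with (g := fun k => (M * q ^ N) * q ^ k). intros k _. rewrite Rmult_assoc, <- pow_add. auto.
  apply rsum_geom; auto. pose proof (pow_le q N). nra.
Qed.

Lemma series_bound f l M q : climit (cs f) l -> 0 <= q < 1 -> 0 <= M ->
  (forall k, Cmod (f k) <= M * q ^ k) -> Cmod l <= M / (1 - q).
Proof.
  intros. pose proof (series_tail f l M q 0 H H0 H1 H2). simpl in H3.
  replace (Cminus l (RtoC 0)) with l in H3 by ring. rewrite Rmult_1_r in H3. auto.
Qed.


Lemma Cmod_omega N : Cmod (omega N) = 1.
Proof.
  unfold Cmod, omega; simpl. pose proof (sin2_cos2 (2 * PI / INR N)). unfold Rsqr in H.
  replace (cos (2 * PI / INR N) * (cos (2 * PI / INR N) * 1) + sin (2 * PI / INR N) * (sin (2 * PI / INR N) * 1)) with 1 by nra.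
  apply sqrt_1.
Qed.

Lemma sum_n_rsum (a : nat -> R) m : sum_n a m = rsum a (S m).
Proof.
  induction m. rewrite sum_O. simpl. ring.
  rewrite sum_Sn, IHm. reflexivity.
Qed.

Lemma Cmod_Cpow_R u n : 0 <= u -> Cmod (Cpow (RtoC u) n) = u ^ n.
Proof. intros. rewrite Cmod_pow, Cmod_R, Rabs_pos_eq; auto. Qed.

Lemma rsum_abs f n : Rabs (rsum f n) <= rsum (fun k => Rabs (f k)) n.
Proof. induction n; simpl. rewrite Rabs_R0; lra. eapply Rle_trans. apply Rabs_triang. lra. Qed.
Lemma rsum_minus f g n : rsum (fun k => f k - g k) n = rsum f n - rsum g n.
Proof. induction n; simpl; [ring|rewrite IHn; ring]. Qed.
Lemma rsum_const c n : rsum (fun _ => c) n = INR n * c.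
Proof. induction n. simpl; ring. change (rsum (fun _ => c) (S n)) with (rsum (fun _ => c) n + c). rewrite IHn, S_INR; ring. Qed.

Lemma parseval_lim (c : nat -> C) (u M q : R) (f : C -> C) Sg :
  0 < u -> 0 <= q < 1 -> 0 <= M -> (forall n, Cmod (c n) * u ^ n <= M * q ^ n) ->
  (forall w, Cmod w = u -> climit (ps c w) (f w)) ->
  is_series (fun n => Cmod (c n) ^ 2 * u ^ (2 * n)) Sg ->
  is_lim_seq (fun N => / INR (S N) * rsum (fun j => Cmod (f (Cmult (RtoC u) (Cpow (omega (S N)) j))) ^ 2) (S N)) Sg.
Proof.
  intros Hu Hq HM Hc Hf HS.
  set (K := M / (1 - q)).
  assert (HK : 0 <= K) by (unfold K; apply Rdiv_le_0_compat; lra).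
  set (g := fun n => Cmod (c n) ^ 2 * u ^ (2 * n)).
  set (E := fun N => 2 * K * (M * q ^ N / (1 - q))).
  assert (Hmain : forall N, Rabs (/ INR (S N) * rsum (fun j => Cmod (f (Cmult (RtoC u) (Cpow (omega (S N)) j))) ^ 2) (S N) - rsum g (S N)) <= E (S N)).
  { intros N. set (N' := S N). set (w := fun j => Cmult (RtoC u) (Cpow (omega N') j)).
    assert (Hw : forall j, Cmod (w j) = u).
    { intros j. unfold w. rewrite Cmod_mult, Cmod_R, Cmod_pow, Cmod_omega, pow1, Rabs_pos_eq; lra. }
    set (P := fun j => ps c (w j) N').
    assert (Hterm : forall j k, Cmod (Cmult (c k) (Cpow (w j) k)) <= M * q ^ k).
    { intros j k. rewrite Cmod_mult, Cmod_pow, Hw. auto. }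
    assert (HT : forall j, Cmod (Cminus (f (w j)) (P j)) <= M * q ^ N' / (1 - q)).
    { intros j. apply series_tail; auto. apply Hf, Hw. }
    assert (HfK : forall j, Cmod (f (w j)) <= K).
    { intros j. apply (series_bound (fun k => Cmult (c k) (Cpow (w j) k))); auto. apply Hf, Hw. }
    assert (HPK : forall j, Cmod (P j) <= K).
    { intros j. unfold P, ps. eapply Rle_trans. apply cs_norm. eapply Rle_trans. apply rsum_le. intros k _. apply Hterm. apply rsum_geom; auto. }
    assert (Hdft : rsum (fun j => Cmod (P j) ^ 2) N' = INR N' * rsum g N').
    { replace (rsum g N') with (rsum (fun n => Cmod (Cmult (c n) (Cpow (RtoC u) n)) ^ 2) N').
      2:{ apply rsum_ext. intros n _. unfold g. rewrite Cmod_mult, Cmod_Cpow_R by lra. rewrite Rpow_mult_distr, <- pow_mult, Nat.mul_comm. auto. }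
      rewrite <- dft by (unfold N'; lia). apply rsum_ext. intros j _. unfold P, ps, w. f_equal. f_equal. apply cs_ext. intros n _.
      rewrite Cpow_mult_l. ring. }
    assert (HN' : 0 < INR N') by (apply lt_0_INR; unfold N'; lia).
    replace (rsum g N') with (/ INR N' * rsum (fun j => Cmod (P j) ^ 2) N') by (rewrite Hdft; field; lra).
    rewrite <- Rmult_minus_distr_l, <- rsum_minus.
    rewrite Rabs_mult, Rabs_pos_eq by (left; apply Rinv_0_lt_compat; auto).
    eapply Rle_trans. apply Rmult_le_compat_l. left; apply Rinv_0_lt_compat; auto.
    eapply Rle_trans. apply rsum_abs. apply rsum_le with (g := fun _ => E N').
    { intros j _. unfold E. fold w.
      pose proof (HT j). pose proof (HfK j). pose proof (HPK j).
      assert (A1 : Cmod (f (w j)) <= Cmod (Cminus (f (w j)) (P j)) + Cmod (P j)).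
      { eapply Rle_trans; [|apply Cmod_triangle]. right. f_equal. ring. }
      assert (A2 : Cmod (P j) <= Cmod (Cminus (f (w j)) (P j)) + Cmod (f (w j))).
      { rewrite Cmod_sym. eapply Rle_trans; [|apply Cmod_triangle]. right. f_equal. ring. }
      pose proof (Cmod_ge_0 (f (w j))). pose proof (Cmod_ge_0 (P j)).
      set (T := M * q ^ N' / (1 - q)) in *.
      change (f (Cmult (RtoC u) (Cpow (omega N') j))) with (f (w j)).
      assert (0 <= T) by (eapply Rle_trans; [apply Cmod_ge_0|apply H]).
      set (a := Cmod (f (w j))) in *. set (b := Cmod (P j)) in *.
      assert (a - b <= T) by lra. assert (b - a <= T) by lra.
      apply Rabs_le. split; nra. }
    rewrite rsum_const. right. field. lra. }
  assert (Hg : is_lim_seq (fun N => rsum g (S N)) Sg).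
  { eapply is_lim_seq_ext; [|exact HS]. intros N. apply sum_n_rsum. }
  assert (HE : is_lim_seq (fun N => E (S N)) 0).
  { unfold E. apply (is_lim_seq_ext (fun N => (2 * K * (M / (1 - q)) * q) * q ^ N)).
    intros N. simpl. field. lra.
    replace (Finite 0) with (Rbar_mult (2 * K * (M / (1 - q)) * q) 0) by (simpl; f_equal; ring).
    apply is_lim_seq_scal_l. apply is_lim_seq_geom. rewrite Rabs_pos_eq; lra. }
  apply is_lim_seq_le_le with (u := fun N => rsum g (S N) - E (S N)) (w := fun N => rsum g (S N) + E (S N)).
  - intros N. specialize (Hmain N). apply Rabs_le_between in Hmain. lra.
  - replace (Finite Sg) with (Finite (Sg - 0)) by (f_equal; ring). apply is_lim_seq_minus'; auto.
  - replace (Finite Sg) with (Finite (Sg + 0)) by (f_equal; ring). apply is_lim_seq_plus'; auto.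
Qed.


Lemma bernoulli h n : 0 <= h -> 1 + INR n * h <= (1 + h) ^ n.
Proof.
  intros Hh. induction n. simpl; lra.
  rewrite S_INR. simpl. assert (0 <= INR n) by apply pos_INR. nra.
Qed.

Lemma poly_bound t : 0 <= t < 1 -> exists C, forall n, (INR n + 1) * t ^ n <= C.
Proof.
  intros Ht. destruct (Req_dec t 0) as [E|E].
  - subst. exists 1. intros [|n]; simpl. lra. rewrite Rmult_0_l, Rmult_0_r. lra.
  - assert (Ht' : 0 < t) by lra. set (h := / t - 1).
    assert (Hh : 0 < h). { unfold h. assert (1 < / t). { rewrite <- Rinv_1. apply Rinv_lt_contravar; lra. } lra. }
    exists (1 + / h). intros n. pose proof (bernoulli h n ltac:(lra)).
    assert (E1 : t ^ n * (1 + h) ^ n = 1). { rewrite <- Rpow_mult_distr. replace (t * (1 + h)) with 1 by (unfold h; field; lra). apply pow1. }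
    assert (0 <= t ^ n) by (apply pow_le; lra).
    assert (Hb : t ^ n * (1 + INR n * h) <= 1) by nra.
    assert (0 <= INR n) by apply pos_INR.
    assert (INR n + 1 <= (1 + / h) * (1 + INR n * h)).
    { replace ((1 + / h) * (1 + INR n * h)) with (1 + INR n * h + / h + INR n) by (field; lra).
      assert (0 < / h) by (apply Rinv_0_lt_compat; lra). nra. }
    assert (0 < / h) by (apply Rinv_0_lt_compat; lra). nra.
Qed.

Lemma poly2_geom t : 0 <= t < 1 -> exists C s, 0 <= s < 1 /\ forall n, (INR n + 1) ^ 2 * t ^ n <= C * s ^ n.
Proof.
  intros Ht. set (s := sqrt t). set (v := sqrt s).
  assert (Hs : 0 <= s < 1). { unfold s. split. apply sqrt_pos. rewrite <- sqrt_1. apply sqrt_lt_1_alt; lra. }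
  assert (Hv : 0 <= v < 1). { unfold v. split. apply sqrt_pos. rewrite <- sqrt_1. apply sqrt_lt_1_alt; lra. }
  destruct (poly_bound v Hv) as [C0 HC0].
  exists (C0 ^ 2), s. split; auto. intros n.
  assert (Et : t = s * s) by (unfold s; rewrite sqrt_sqrt; lra).
  assert (Es : s = v * v) by (unfold v; rewrite sqrt_sqrt; lra).
  assert (E : (INR n + 1) ^ 2 * t ^ n = ((INR n + 1) * v ^ n) ^ 2 * s ^ n).
  { rewrite Et, Es. rewrite !Rpow_mult_distr. ring. }
  rewrite E. apply Rmult_le_compat_r. apply pow_le; lra.
  assert (0 <= (INR n + 1) * v ^ n). { apply Rmult_le_pos. pose proof (pos_INR n); lra. apply pow_le; lra. }
  specialize (HC0 n). nra.
Qed.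

Lemma rsum_nonneg f n : (forall i, 0 <= f i) -> 0 <= rsum f n.
Proof. intros Hf. induction n; simpl. lra. pose proof (Hf n). lra. Qed.

Lemma rsum_term f n k : (forall i, 0 <= f i) -> (k < n)%nat -> f k <= rsum f n.
Proof.
  intros Hf. induction n; intros Hk. lia. simpl.
  destruct (Nat.eq_dec k n). subst. pose proof (rsum_nonneg f n Hf). lra.
  pose proof (IHn ltac:(lia)). pose proof (Hf n). lra.
Qed.

Lemma coef_bound (c : nat -> C) r : (exists l, climit (ps c (RtoC r)) l) -> 0 <= r ->
  exists M, 0 <= M /\ forall n, Cmod (c n) * r ^ n <= M.
Proof.
  intros [l Hl] Hr. destruct (Hl 1 ltac:(lra)) as [N HN].
  set (tm := fun k => Cmod (Cmult (c k) (Cpow (RtoC r) k))).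
  assert (Htm : forall k, Cmod (c k) * r ^ k = tm k).
  { intros k. unfold tm. rewrite Cmod_mult, Cmod_Cpow_R; auto. }
  exists (2 + rsum tm N). split.
  { pose proof (rsum_nonneg tm N (fun i => Cmod_ge_0 _)). lra. }
  intros n. rewrite Htm. destruct (Nat.lt_ge_cases n N) as [L|L].
  - pose proof (rsum_term tm N n (fun i => Cmod_ge_0 _) L). lra.
  - pose proof (HN n L). pose proof (HN (S n) ltac:(lia)).
    pose proof (rsum_nonneg tm N (fun i => Cmod_ge_0 _)).
    assert (tm n <= Cmod (Cminus (ps c r (S n)) l) + Cmod (Cminus (ps c r n) l)).
    { unfold tm. rewrite (Cmod_sym (ps c r n)). eapply Rle_trans; [|apply Cmod_triangle]. right. f_equal.
      unfold ps. simpl. ring. }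
    lra.
Qed.

Lemma DOM (c : nat -> C) R0 r : (forall v, Cmod v < R0 -> exists l, climit (ps c v) l) -> 0 <= r < R0 ->
  exists M q, 0 <= M /\ 0 <= q < 1 /\ forall n, Cmod (c n) * (INR n + 1) ^ 2 * r ^ n <= M * q ^ n.
Proof.
  intros Hc Hr. set (r2 := (r + R0) / 2).
  destruct (coef_bound c r2) as [M0 [HM0 HM]].
  { apply Hc. rewrite Cmod_R, Rabs_pos_eq; unfold r2; lra. } { unfold r2; lra. }
  assert (Hr2 : 0 < r2) by (unfold r2; lra).
  destruct (poly2_geom (r / r2)) as [C [s [Hs HC]]].
  { split. apply Rdiv_le_0_compat; lra. apply (Rmult_lt_reg_r r2); auto. field_simplify; unfold r2; lra. }
  assert (HC0 : 1 <= C). { specialize (HC O). simpl in HC. lra. }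
  exists (M0 * C), s. split. nra. split; auto. intros n.
  replace (Cmod (c n) * (INR n + 1) ^ 2 * r ^ n) with ((Cmod (c n) * r2 ^ n) * ((INR n + 1) ^ 2 * (r / r2) ^ n)).
  2:{ unfold Rdiv. rewrite Rpow_mult_distr, pow_inv. field. apply pow_nonzero; lra. }
  rewrite (Rmult_assoc M0). apply Rmult_le_compat; auto.
  apply Rmult_le_pos; [apply Cmod_ge_0|apply pow_le; lra].
  apply Rmult_le_pos; [apply pow_le; pose proof (pos_INR n); lra| apply pow_le; apply Rdiv_le_0_compat; lra].
Qed.


Lemma deriv_unique (g : C -> C) z L S K d0 : @is_derive C_AbsRing C_NormedModule g z L -> 0 < d0 -> 0 <= K ->
  (forall d, Cmod d < d0 -> Cmod (Cminus (Cminus (g (Cplus z d)) (g z)) (Cmult d S)) <= K * Cmod d ^ 2) -> L = S.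
Proof.
  intros [_ Hd] Hd0 HK HS.
  specialize (Hd z (fun P HP => HP)).
  assert (Hall : forall eps, 0 < eps -> Cmod (Cminus L S) <= 2 * eps).
  { intros eps He. destruct (Hd (mkposreal eps He)) as [del Hdel]. simpl in Hdel.
    set (t := Rmin (del / 2) (Rmin (d0 / 2) (eps / (K + 1)))).
    assert (Ht : 0 < t). { unfold t. pose proof (cond_pos del). apply Rmin_pos. lra. apply Rmin_pos. lra. apply Rdiv_lt_0_compat; lra. }
    assert (Ht1 : t <= del / 2) by apply Rmin_l.
    assert (Ht2 : t <= d0 / 2) by (eapply Rle_trans; [apply Rmin_r|apply Rmin_l]).
    assert (Ht3 : t <= eps / (K + 1)) by (eapply Rle_trans; [apply Rmin_r|apply Rmin_r]).
    assert (Hmt : Cmod (RtoC t) = t) by (rewrite Cmod_R, Rabs_pos_eq; lra).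
    assert (Hb : ball z del (Cplus z (RtoC t))).
    { change (Cmod (Cminus (Cplus z (RtoC t)) z) < del).
      replace (Cminus (Cplus z (RtoC t)) z) with (RtoC t) by ring. pose proof (cond_pos del). lra. }
    specialize (Hdel _ Hb).
    change (Cmod (Cminus (Cminus (g (Cplus z (RtoC t))) (g z)) (Cmult (Cminus (Cplus z (RtoC t)) z) L))
       <= eps * Cmod (Cminus (Cplus z (RtoC t)) z)) in Hdel.
    replace (Cminus (Cplus z (RtoC t)) z) with (RtoC t) in Hdel by ring.
    rewrite Hmt in Hdel.
    specialize (HS (RtoC t) ltac:(lra)). rewrite Hmt in HS.
    assert (E : Cmult (RtoC t) (Cminus L S) = Cminus (Cminus (Cminus (g (Cplus z t)) (g z)) (Cmult t S))
                                               (Cminus (Cminus (g (Cplus z t)) (g z)) (Cmult t L))) by ring.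
    assert (H1 : t * Cmod (Cminus L S) <= K * t ^ 2 + eps * t).
    { rewrite <- Hmt at 1. rewrite <- Cmod_mult, E. eapply Rle_trans. unfold Cminus at 1. apply Cmod_triangle.
      rewrite Cmod_opp. lra. }
    assert (K * t <= eps). { apply (Rmult_le_compat_l K) in Ht3; auto. 
      eapply Rle_trans; [exact Ht3|]. apply (Rmult_le_reg_r (K+1)). lra. field_simplify; lra. }
    assert (t * Cmod (Cminus L S) <= t * (2 * eps)) by nra.
    apply Rmult_le_reg_l in H0; auto. }
  assert (Cmod (Cminus L S) = 0).
  { apply Rle_antisym; [|apply Cmod_ge_0]. destruct (Rle_dec (Cmod (Cminus L S)) 0) as [|Hc]; auto.
    specialize (Hall (Cmod (Cminus L S) / 4) ltac:(lra)). lra. }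
  apply Cmod_eq_0 in H. replace L with (Cplus (Cminus L S) S) by ring. rewrite H. apply Cplus_0_l.
Qed.

Definition En (x y : C) (n : nat) : C :=
  Cminus (Cminus (Cpow x n) (Cpow y n)) (Cmult (Cmult (RtoC (INR n)) (Cpow y (n - 1))) (Cminus x y)).

Lemma En_rec x y n : En x y (S n) = Cplus (Cmult x (En x y n)) (Cmult (Cmult (RtoC (INR n)) (Cpow y (n - 1))) (Cmult (Cminus x y) (Cminus x y))).
Proof.
  unfold En. destruct n.
  - simpl. apply injective_projections; simpl; ring.
  - replace (S (S n) - 1)%nat with (S n) by lia. replace (S n - 1)%nat with n by lia.
    rewrite (S_INR (S n)), RtoC_plus. simpl Cpow. set (a := RtoC (INR (S n))). ring.
Qed.

Lemma En_bound x y r n : 0 < r -> Cmod x <= r -> Cmod y <= r ->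
  r ^ 2 * Cmod (En x y n) <= (INR n) ^ 2 * r ^ n * Cmod (Cminus x y) ^ 2.
Proof.
  intros Hr Hx Hy. induction n.
  - unfold En. simpl. replace (Cminus (Cminus (RtoC 1) (RtoC 1)) (Cmult (Cmult (RtoC 0) (RtoC 1)) (Cminus x y))) with (RtoC 0)
      by (apply injective_projections; simpl; ring). rewrite Cmod_0. lra.
  - rewrite En_rec. set (dd := Cmod (Cminus x y)).
    assert (H1 : Cmod (Cmult x (En x y n)) <= r * Cmod (En x y n)).
    { rewrite Cmod_mult. apply Rmult_le_compat_r; auto. apply Cmod_ge_0. }
    assert (H2 : r ^ 2 * Cmod (Cmult (Cmult (RtoC (INR n)) (Cpow y (n - 1))) (Cmult (Cminus x y) (Cminus x y))) <= INR n * r ^ (S n) * dd ^ 2).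
    { rewrite !Cmod_mult, Cmod_R, Rabs_pos_eq by apply pos_INR. rewrite Cmod_pow. fold dd.
      destruct n. simpl. rewrite Rmult_0_l. lra.
      replace (S n - 1)%nat with n by lia.
      assert (Cmod y ^ n <= r ^ n) by (apply pow_incr; split; auto; apply Cmod_ge_0).
      assert (0 <= INR (S n)) by apply pos_INR. assert (0 <= dd) by apply Cmod_ge_0.
      assert (0 <= Cmod y ^ n) by (apply pow_le; apply Cmod_ge_0).
      replace (r ^ S (S n)) with (r ^ 2 * r ^ n) by (simpl; ring).
      assert (0 <= r ^ 2) by (apply pow_le; lra).
      assert (0 <= INR (S n) * (dd * dd)) by nra.
      replace (r ^ 2 * (INR (S n) * Cmod y ^ n * (dd * dd))) with ((r ^ 2 * (INR (S n) * (dd * dd))) * Cmod y ^ n) by ring.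
      replace (INR (S n) * (r ^ 2 * r ^ n) * dd ^ 2) with ((r ^ 2 * (INR (S n) * (dd * dd))) * r ^ n) by ring.
      apply Rmult_le_compat_l; auto. nra. }
    eapply Rle_trans. apply Rmult_le_compat_l. apply pow_le; lra. apply Cmod_triangle.
    rewrite Rmult_plus_distr_l.
    assert (r ^ 2 * Cmod (Cmult x (En x y n)) <= r * (INR n ^ 2 * r ^ n * dd ^ 2)).
    { eapply Rle_trans. apply Rmult_le_compat_l. apply pow_le; lra. exact H1.
      replace (r ^ 2 * (r * Cmod (En x y n))) with (r * (r ^ 2 * Cmod (En x y n))) by ring.
      apply Rmult_le_compat_l; [lra|exact IHn]. }
    rewrite S_INR. assert (0 <= INR n) by apply pos_INR. assert (0 <= dd ^ 2) by (apply pow_le, Cmod_ge_0).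
    assert (0 <= r ^ n) by (apply pow_le; lra).
    replace (r ^ S n) with (r * r ^ n) in * by (simpl; ring).
    assert (0 <= r * r ^ n * dd ^ 2) by (apply Rmult_le_pos; auto; apply Rmult_le_pos; lra).
    nra.
Qed.

Lemma Cminus_0_r x : Cminus x (RtoC 0) = x.
Proof. ring. Qed.

Lemma deriv_series (b : nat -> C) R0 c0 (g : C -> C) L z :
  (forall z', Cmod (Cplus z' c0) < R0 -> climit (ps b (Cplus z' c0)) (g z')) ->
  Cmod (Cplus z c0) < R0 -> @is_derive C_AbsRing C_NormedModule g z L ->
  climit (ps (fun n => Cmult (RtoC (INR n)) (b n)) (Cplus z c0)) (Cmult (Cplus z c0) L).
Proof.
  intros Hg Hz Hd. set (w := Cplus z c0) in *.
  assert (Hex : forall v, Cmod v < R0 -> exists l, climit (ps b v) l).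
  { intros v Hv. exists (g (Cminus v c0)). assert (E : Cplus (Cminus v c0) c0 = v) by ring.
    specialize (Hg (Cminus v c0)). rewrite E in Hg. auto. }
  set (r1 := (Cmod w + R0) / 2).
  assert (Hw0 := Cmod_ge_0 w).
  assert (Hr1 : 0 < r1) by (unfold r1; lra).
  destruct (DOM b R0 r1 Hex) as [M [q [HM [Hq Hb]]]]. unfold r1; lra.
  set (D := fun n => Cmult (Cmult (RtoC (INR n)) (b n)) (Cpow w (n - 1))).
  assert (HD : forall n, Cmod (D n) <= M / r1 * q ^ n).
  { intros n. unfold D. rewrite !Cmod_mult, Cmod_R, Rabs_pos_eq, Cmod_pow by apply pos_INR.
    destruct n. simpl. rewrite !Rmult_0_l. apply Rmult_le_pos; [|lra]. apply Rdiv_le_0_compat; lra.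
    replace (S n - 1)%nat with n by lia.
    specialize (Hb (S n)).
    apply (Rmult_le_reg_l r1); auto. replace (r1 * (M / r1 * q ^ S n)) with (M * q ^ S n) by (field; lra).
    eapply Rle_trans; [|exact Hb].
    assert (Hp : Cmod w ^ n <= r1 ^ n) by (apply pow_incr; unfold r1; lra).
    assert (0 <= Cmod w ^ n) by (apply pow_le; lra).
    assert (HI : 0 <= INR (S n)) by apply pos_INR.
    assert (INR (S n) <= (INR (S n) + 1) ^ 2) by nra.
    assert (INR (S n) * Cmod w ^ n <= (INR (S n) + 1) ^ 2 * r1 ^ n) by (apply Rmult_le_compat; lra).
    assert (0 <= r1 * Cmod (b (S n))) by (apply Rmult_le_pos; [lra|apply Cmod_ge_0]).
    replace (r1 ^ S n) with (r1 * r1 ^ n) by (simpl; ring). nra. }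
  assert (HexD : @ex_series C_AbsRing C_CompleteNormedModule D).
  { apply (@ex_series_le C_AbsRing C_CompleteNormedModule D (fun n => M / r1 * q ^ n)). exact HD.
    assert (Hg1 : ex_series (fun n => q ^ n)) by (apply ex_series_geom; rewrite Rabs_pos_eq; lra).
    apply (ex_series_ext (fun n => scal (M / r1) (q ^ n))). intros; reflexivity. apply (@ex_series_scal_l R_AbsRing R_NormedModule (M / r1) (fun n => q ^ n)); exact Hg1. }
  destruct HexD as [Sd HS].
  assert (A3 : climit (cs D) Sd) by (apply is_series_climit; exact HS).
  assert (Hkey : forall d, Cmod d < r1 - Cmod w ->
     Cmod (Cminus (Cminus (g (Cplus z d)) (g z)) (Cmult d Sd)) <= (M / (1 - q) / r1 ^ 2) * Cmod d ^ 2).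
  { intros d Hd'.
    assert (Hwd : Cmod (Cplus w d) <= r1) by (eapply Rle_trans; [apply Cmod_triangle|lra]).
    assert (A1 : climit (ps b (Cplus w d)) (g (Cplus z d))).
    { specialize (Hg (Cplus z d)). replace (Cplus (Cplus z d) c0) with (Cplus w d) in Hg by (unfold w; ring). apply Hg. unfold r1 in Hwd; lra. }
    assert (A2 : climit (ps b w) (g z)) by (apply Hg; auto).
    pose proof (climit_plus _ _ _ _ (climit_plus _ _ _ _ A1 (climit_scal (RtoC (-1)) _ _ A2)) (climit_scal (Copp d) _ _ A3)) as comb.
    replace (Cminus (Cminus (g (Cplus z d)) (g z)) (Cmult d Sd)) with
      (Cminus (Cplus (Cplus (g (Cplus z d)) (Cmult (RtoC (-1)) (g z))) (Cmult (Copp d) Sd)) (RtoC 0))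
      by (apply injective_projections; simpl; ring).
    apply (climit_close _ _ (RtoC 0) _ comb). exists O. intros m _.
    replace (Cminus (Cplus (Cplus (ps b (Cplus w d) m) (Cmult (RtoC (-1)) (ps b w m))) (Cmult (Copp d) (cs D m))) (RtoC 0))
      with (cs (fun n => Cmult (b n) (En (Cplus w d) w n)) m).
    2:{ unfold ps. rewrite <- !cs_scal, <- !cs_plus.
        rewrite Cminus_0_r. apply cs_ext. intros n _. unfold En, D. ring. }
    eapply Rle_trans. apply cs_norm.
    eapply Rle_trans. apply rsum_le with (g := fun n => (M * Cmod d ^ 2 / r1 ^ 2) * q ^ n).
    { intros n _. rewrite Cmod_mult.
      pose proof (En_bound (Cplus w d) w r1 n Hr1 Hwd ltac:(unfold r1; lra)) as HE.
      replace (Cminus (Cplus w d) w) with d in HE by ring.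
      specialize (Hb n). pose proof (Cmod_ge_0 (b n)). pose proof (Cmod_ge_0 (En (Cplus w d) w n)).
      assert (Hr2 : 0 < r1 ^ 2) by (apply pow_lt; lra).
      apply (Rmult_le_reg_l (r1 ^ 2)); auto.
      replace (r1 ^ 2 * (M * Cmod d ^ 2 / r1 ^ 2 * q ^ n)) with ((M * q ^ n) * Cmod d ^ 2) by (field; lra).
      assert (INR n ^ 2 <= (INR n + 1) ^ 2) by (pose proof (pos_INR n); nra).
      assert (0 <= Cmod d ^ 2) by (apply pow_le, Cmod_ge_0).
      assert (0 <= r1 ^ n) by (apply pow_le; lra).
      assert (INR n ^ 2 * r1 ^ n * Cmod d ^ 2 <= (INR n + 1) ^ 2 * r1 ^ n * Cmod d ^ 2)
        by (apply Rmult_le_compat_r; auto; apply Rmult_le_compat_r; auto).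
      assert (Hx : r1 ^ 2 * (Cmod (b n) * Cmod (En (Cplus w d) w n)) <= Cmod (b n) * ((INR n + 1) ^ 2 * r1 ^ n * Cmod d ^ 2)).
      { replace (r1 ^ 2 * (Cmod (b n) * Cmod (En (Cplus w d) w n))) with (Cmod (b n) * (r1 ^ 2 * Cmod (En (Cplus w d) w n))) by ring.
        apply Rmult_le_compat_l; auto. lra. }
      eapply Rle_trans; [exact Hx|]. replace (Cmod (b n) * ((INR n + 1) ^ 2 * r1 ^ n * Cmod d ^ 2)) with ((Cmod (b n) * (INR n + 1) ^ 2 * r1 ^ n) * Cmod d ^ 2) by ring.
      apply Rmult_le_compat_r; auto. }
    eapply Rle_trans. apply rsum_geom; auto. apply Rmult_le_pos. apply Rmult_le_pos; auto. apply pow_le, Cmod_ge_0.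
      left; apply Rinv_0_lt_compat, pow_lt; lra.
    right. field. split; lra. }
  assert (HK : 0 <= M / (1 - q) / r1 ^ 2).
  { apply Rdiv_le_0_compat. apply Rdiv_le_0_compat; lra. apply pow_lt; lra. }
  assert (HLS : L = Sd) by (apply (deriv_unique g z L Sd (M / (1 - q) / r1 ^ 2) (r1 - Cmod w)); auto; unfold r1; lra).
  rewrite HLS.
  apply climit_ext with (fun m => Cmult w (cs D m)).
  { intros m. unfold ps. rewrite <- cs_scal. apply cs_ext. intros n _. unfold D. destruct n.
    - simpl INR. ring.
    - replace (S n - 1)%nat with n by lia. simpl Cpow. ring. }
  apply climit_scal; auto.
Qed.


Lemma shift_ok c0 v : Cplus (Cminus v c0) c0 = v.
Proof. ring. Qed.

Lemma deriv_coef (a : nat -> C) (h h' : C -> C) R0 c0 u :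
  0 < u < R0 ->
  (forall z', Cmod (Cplus z' c0) < R0 -> climit (ps a (Cplus z' c0)) (h z')) ->
  (forall z', Cmod (Cplus z' c0) < R0 -> @is_derive C_AbsRing C_NormedModule h z' (h' z')) ->
  exists M q, 0 <= M /\ 0 <= q < 1 /\
   (forall n, Cmod (Cmult (RtoC (INR n)) (a n)) * u ^ n <= M * q ^ n) /\
   (forall w, Cmod w = u -> climit (ps (fun n => Cmult (RtoC (INR n)) (a n)) w) (Cmult w (h' (Cminus w c0)))).
Proof.
  intros Hu Ha Hd.
  assert (Hex : forall v, Cmod v < R0 -> exists l, climit (ps a v) l).
  { intros v Hv. exists (h (Cminus v c0)). specialize (Ha (Cminus v c0)). rewrite shift_ok in Ha. auto. }
  destruct (DOM a R0 u Hex ltac:(lra)) as [M [q [HM [Hq Hb]]]].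
  exists M, q. split; auto. split; auto. split.
  - intros n. specialize (Hb n). rewrite Cmod_mult, Cmod_R, Rabs_pos_eq by apply pos_INR.
    eapply Rle_trans; [|exact Hb]. pose proof (pos_INR n). pose proof (Cmod_ge_0 (a n)).
    assert (0 <= u ^ n) by (apply pow_le; lra).
    assert (INR n <= (INR n + 1) ^ 2) by nra.
    assert (0 <= Cmod (a n) * u ^ n) by nra. nra.
  - intros w Hw. pose proof (deriv_series a R0 c0 h (h' (Cminus w c0)) (Cminus w c0) Ha) as HH.
    rewrite shift_ok in HH. apply HH. lra. apply Hd. rewrite shift_ok. lra.
Qed.

Lemma core (a b : nat -> C) (h g h' g' : C -> C) R0 c0 k u Sa Sb :
  0 <= k -> 0 < u < R0 ->
  (forall z', Cmod (Cplus z' c0) < R0 -> climit (ps a (Cplus z' c0)) (h z')) ->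
  (forall z', Cmod (Cplus z' c0) < R0 -> climit (ps b (Cplus z' c0)) (g z')) ->
  (forall z', Cmod (Cplus z' c0) < R0 -> @is_derive C_AbsRing C_NormedModule h z' (h' z')) ->
  (forall z', Cmod (Cplus z' c0) < R0 -> @is_derive C_AbsRing C_NormedModule g z' (g' z')) ->
  (forall z', Cmod (Cplus z' c0) < R0 -> Cmod (g' z') <= k * Cmod (h' z')) ->
  is_series (fun n => Cmod (Cmult (RtoC (INR n)) (a n)) ^ 2 * u ^ (2 * n)) Sa ->
  is_series (fun n => Cmod (Cmult (RtoC (INR n)) (b n)) ^ 2 * u ^ (2 * n)) Sb ->
  Sb <= k ^ 2 * Sa.
Proof.
  intros Hk Hu Ha Hb Hda Hdb Hgh HSa HSb.
  destruct (deriv_coef a h h' R0 c0 u Hu Ha Hda) as [Ma [qa [HMa [Hqa [Hca Hla]]]]].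
  destruct (deriv_coef b g g' R0 c0 u Hu Hb Hdb) as [Mb [qb [HMb [Hqb [Hcb Hlb]]]]].
  pose proof (parseval_lim _ u Ma qa _ Sa ltac:(lra) Hqa HMa Hca Hla HSa) as La.
  pose proof (parseval_lim _ u Mb qb _ Sb ltac:(lra) Hqb HMb Hcb Hlb HSb) as Lb.
  apply is_lim_seq_scal_l with (a := k ^ 2) in La.
  assert (H : Rbar_le Sb (Rbar_mult (k ^ 2) Sa)).
  2:{ simpl in H. exact H. }
  eapply is_lim_seq_le; [|exact Lb|exact La].
  intros N. cbv beta.
  set (N' := S N).
  assert (HN : 0 < / INR N') by (apply Rinv_0_lt_compat, lt_0_INR; unfold N'; lia).
  match goal with |- _ <= k ^ 2 * (?i * rsum ?F ?n) => replace (k ^ 2 * (i * rsum F n)) with (i * rsum (fun j => k ^ 2 * F j) n) by (rewrite rsum_scal; ring) end.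
  apply Rmult_le_compat_l; [lra|]. apply rsum_le. intros j _.
  set (w := Cmult (RtoC u) (Cpow (omega N') j)).
  assert (Hw : Cmod w = u).
  { unfold w. rewrite Cmod_mult, Cmod_R, Cmod_pow, Cmod_omega, pow1, Rabs_pos_eq; lra. }
  rewrite !Cmod_mult.
  assert (Hz : Cmod (Cplus (Cminus w c0) c0) < R0) by (rewrite shift_ok; lra).
  specialize (Hgh _ Hz). pose proof (Cmod_ge_0 (g' (Cminus w c0))).
  rewrite Hw. assert (0 <= u * Cmod (g' (Cminus w c0))) by (apply Rmult_le_pos; lra).
  assert (u * Cmod (g' (Cminus w c0)) <= k * (u * Cmod (h' (Cminus w c0)))).
  { replace (k * (u * Cmod (h' (Cminus w c0)))) with (u * (k * Cmod (h' (Cminus w c0)))) by ring.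
    apply Rmult_le_compat_l; lra. }
  nra.
Qed.


Lemma mono (a : nat -> R) X : 0 < X -> Rbar_le X (CV_radius a) -> a O = 0 ->
  (forall x, 0 < x < X -> 0 <= PSeries (fun n => INR n * a n) x) ->
  forall x, 0 <= x < X -> 0 <= PSeries a x.
Proof.
  intros HX Hrad Ha0 Hpos x Hx.
  assert (Hin : forall y, 0 <= y < X -> Rbar_lt (Rabs y) (CV_radius a)).
  { intros y Hy. rewrite Rabs_pos_eq by lra. eapply Rbar_lt_le_trans; [|exact Hrad]. simpl. lra. }
  assert (Hder : forall y, 0 <= y < X -> is_derive (PSeries a) y (PSeries (PS_derive a) y)).
  { intros y Hy. apply is_derive_PSeries, Hin; auto. }
  assert (Hcont : forall y, 0 <= y < X -> continuity_pt (PSeries a) y).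
  { intros y Hy. apply continuity_pt_filterlim. apply (ex_derive_continuous (K := R_AbsRing) (V := R_NormedModule)).
    eexists. apply Hder; auto. }
  destruct (Req_dec x 0) as [E|E].
  { subst. rewrite PSeries_0, Ha0. lra. }
  assert (Hstep : forall e, 0 < e < x -> PSeries a e <= PSeries a x).
  { intros e He. destruct (MVT_gen (PSeries a) e x (PSeries (PS_derive a))) as [c [Hc Hmvt]].
    - intros y Hy. rewrite Rmin_left, Rmax_right in Hy by lra. apply Hder. lra.
    - intros y Hy. rewrite Rmin_left, Rmax_right in Hy by lra. apply Hcont. lra.
    - rewrite Rmin_left, Rmax_right in Hc by lra.
      assert (0 <= PSeries (PS_derive a) c).
      { assert (Hc0 : 0 < c) by lra.
        pose proof (Hpos c ltac:(lra)) as Hp.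
        rewrite (PSeries_ext _ (PS_incr_1 (PS_derive a))) in Hp.
        2:{ intros [|n]. simpl; rewrite Rmult_0_l; reflexivity. reflexivity. }
        rewrite PSeries_incr_1 in Hp.
        apply (Rmult_le_reg_l c); auto. rewrite Rmult_0_r. auto. }
      assert (0 <= PSeries (PS_derive a) c * (x - e)) by (apply Rmult_le_pos; lra). lra. }
  destruct (Rle_dec 0 (PSeries a x)) as [|Hneg]; auto. exfalso.
  assert (Heps : 0 < - PSeries a x) by lra.
  pose proof (proj1 (continuity_pt_filterlim _ _) (Hcont 0 ltac:(lra))) as Hc0.
  rewrite PSeries_0, Ha0 in Hc0.
  destruct (proj1 (filterlim_locally _ _) Hc0 (mkposreal _ Heps)) as [del Hdel].
  set (e := Rmin (del / 2) (x / 2)).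
  assert (He : 0 < e) by (unfold e; apply Rmin_pos; pose proof (cond_pos del); lra).
  assert (He2 : e <= x / 2) by apply Rmin_r.
  assert (He1 : e <= del / 2) by apply Rmin_l.
  assert (Hb : ball 0 del e).
  { change (Rabs (e - 0) < del). rewrite Rabs_pos_eq; pose proof (cond_pos del); lra. }
  specialize (Hdel e Hb). change (Rabs (PSeries a e - 0) < - PSeries a x) in Hdel.
  pose proof (Hstep e ltac:(lra)). apply Rabs_lt_between in Hdel. lra.
Qed.

Lemma Rbar_le_sup X L : 0 <= X -> Rbar_le 0 L -> (forall r, 0 <= r < X -> Rbar_le r L) -> Rbar_le X L.
Proof.
  intros HX H0 H. destruct L as [l| |]; simpl in *; auto.
  destruct (Rle_dec X l) as [|Hc]; auto. exfalso.
  specialize (H ((X + l) / 2) ltac:(lra)). simpl in H. lra.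
Qed.

Lemma radius_ok (a b : nat -> C) R0 (s : nat -> R) K0 :
  (forall v, Cmod v < R0 -> exists l, climit (ps a v) l) ->
  (forall v, Cmod v < R0 -> exists l, climit (ps b v) l) -> 0 <= K0 -> 0 < R0 ->
  (forall n, Rabs (s n) <= K0 * (INR n + 1) ^ 2 * (Cmod (a n) ^ 2 + Cmod (b n) ^ 2)) ->
  Rbar_le (R0 ^ 2) (CV_radius s).
Proof.
  intros Ha Hb HK HR Hs. apply Rbar_le_sup. apply pow_le; lra. apply CV_radius_ge_0.
  intros r Hr. set (p := sqrt r).
  assert (Hp : 0 <= p < R0).
  { unfold p. split. apply sqrt_pos. rewrite <- (sqrt_pow2 R0) by lra. apply sqrt_lt_1_alt. lra. }
  assert (Epr : r = p ^ 2) by (unfold p; rewrite pow2_sqrt; lra).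
  destruct (DOM a R0 p Ha Hp) as [Ma [qa [HMa [Hqa HA]]]].
  destruct (DOM b R0 p Hb Hp) as [Mb [qb [HMb [Hqb HB]]]].
  apply (proj1 (CV_radius_bounded s)). exists (K0 * (Ma ^ 2 + Mb ^ 2)). intros n.
  rewrite Rabs_mult, (Rabs_pos_eq (r ^ n)) by (apply pow_le; lra).
  eapply Rle_trans. apply Rmult_le_compat_r. apply pow_le; lra. apply Hs.
  assert (Hx : forall (c : nat -> C) M q, 0 <= M -> 0 <= q < 1 -> (forall n, Cmod (c n) * (INR n + 1) ^ 2 * p ^ n <= M * q ^ n) ->
             (INR n + 1) ^ 2 * Cmod (c n) ^ 2 * r ^ n <= M ^ 2).
  { intros c M q HM0 Hq Hc. specialize (Hc n).
    assert (0 <= q ^ n <= 1) by (split; [apply pow_le; lra| rewrite <- (pow1 n); apply pow_incr; lra]).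
    assert (0 <= Cmod (c n) * (INR n + 1) ^ 2 * p ^ n).
    { apply Rmult_le_pos. apply Rmult_le_pos. apply Cmod_ge_0. apply pow_le; pose proof (pos_INR n); lra. apply pow_le; lra. }
    assert (Hc' : Cmod (c n) * (INR n + 1) ^ 2 * p ^ n <= M) by (assert (M * q ^ n <= M) by (pose proof (Rmult_le_compat_l M _ _ HM0 (proj2 H)); lra); lra).
    assert (1 <= (INR n + 1) ^ 2) by (pose proof (pos_INR n); nra).
    replace ((INR n + 1) ^ 2 * Cmod (c n) ^ 2 * r ^ n) with ((Cmod (c n) * (INR n + 1) ^ 2 * p ^ n) ^ 2 / (INR n + 1) ^ 2).
    2:{ rewrite Epr, <- pow_mult. replace (2 * n)%nat with (n * 2)%nat by lia. rewrite pow_mult. pose proof (pos_INR n). field. lra. }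
    set (X := Cmod (c n) * (INR n + 1) ^ 2 * p ^ n) in *.
    assert (X ^ 2 <= M ^ 2) by (apply pow_incr; lra). assert (0 <= X ^ 2) by (apply pow_le; lra).
    unfold Rdiv. apply Rle_trans with (X ^ 2 * 1); [|lra]. apply Rmult_le_compat_l; auto.
    rewrite <- Rinv_1. apply Rinv_le_contravar; lra. }
  pose proof (Hx a Ma qa HMa Hqa HA). pose proof (Hx b Mb qb HMb Hqb HB).
  replace (K0 * (INR n + 1) ^ 2 * (Cmod (a n) ^ 2 + Cmod (b n) ^ 2) * r ^ n)
    with (K0 * ((INR n + 1) ^ 2 * Cmod (a n) ^ 2 * r ^ n + (INR n + 1) ^ 2 * Cmod (b n) ^ 2 * r ^ n)) by ring.
  apply Rmult_le_compat_l; auto. lra.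
Qed.


Lemma bnd_helper n e p q x y K0 : 0 <= e <= (INR n + 1) ^ 2 -> Rabs p <= K0 -> Rabs q <= K0 -> 0 <= x -> 0 <= y ->
  Rabs (e * (p * x + q * y)) <= K0 * (INR n + 1) ^ 2 * (x + y).
Proof.
  intros He Hp Hq Hx Hy. rewrite Rabs_mult, Rabs_pos_eq by lra.
  assert (Rabs (p * x + q * y) <= K0 * (x + y)).
  { eapply Rle_trans. apply Rabs_triang. rewrite !Rabs_mult, (Rabs_pos_eq x), (Rabs_pos_eq y) by lra. nra. }
  assert (0 <= Rabs (p * x + q * y)) by apply Rabs_pos.
  assert (0 <= K0 * (x + y)) by lra. nra.
Qed.

Lemma exs s (X x : R) : Rbar_le X (CV_radius s) -> 0 <= x < X -> ex_series (fun n => s n * x ^ n).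
Proof.
  intros Hr Hx. assert (H : Rbar_lt (Rabs x) (CV_radius s)).
  { rewrite Rabs_pos_eq by lra. apply (Rbar_lt_le_trans _ (Finite X) _); [simpl; lra|exact Hr]. }
  apply CV_radius_inside in H. unfold ex_pseries in H.
  eapply ex_series_ext; [|exact H]. intros n. simpl. rewrite pow_n_pow. unfold scal; simpl. unfold mult; simpl. ring.
Qed.

Lemma sf_ext u v : (forall n, u n = v n) -> sum_from1 u = sum_from1 v.
Proof. intros E. unfold sum_from1. apply Lim_seq_ext. intros N. apply sum_n_ext. intros; apply E. Qed.

Lemma sf_val u : ex_series u -> sum_from1 u = Finite (Series (fun n => u (S n))).
Proof.
  intros H. apply ex_series_incr_1 in H. apply Series_correct in H.
  unfold sum_from1. apply is_lim_seq_unique. exact H.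
Qed.


Theorem lemma2p3 (gamma k : R) (a b : nat -> C) (h g h' g' : C -> C) :
  0 <= gamma < 1 ->
  0 <= k < 1 ->
  (* power series expansions of h and g about -gamma/(1-gamma), valid in Omega_gamma *)
  (forall z : C, Omega gamma z -> is_pseries a (Cplus z (RtoC (cgam gamma))) (h z)) ->
  (forall z : C, Omega gamma z -> is_pseries b (Cplus z (RtoC (cgam gamma))) (g z)) ->
  (* h' and g' are the complex derivatives of h and g in Omega_gamma *)
  (forall z : C, Omega gamma z -> is_derive h z (h' z)) ->
  (forall z : C, Omega gamma z -> is_derive g z (g' z)) ->
  (forall z : C, Omega gamma z -> Cmod (h z) <= 1) ->
  (forall z : C, Omega gamma z -> Cmod (g' z) <= k * Cmod (h' z)) ->
  forall z : C,
    let rho := Cmod (Cplus (Cmult (RtoC (1 - gamma)) z) (RtoC gamma)) in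
    rho < 1 ->
    Rbar_le
      (sum_from1 (fun n => INR n * (Cmod (b n))^2 / (1 - gamma)^(2*n) * rho^(2*n)))
      (Rbar_mult (k^2)
        (sum_from1 (fun n => INR n * (Cmod (a n))^2 / (1 - gamma)^(2*n) * rho^(2*n))))
    /\
    Rbar_le
      (sum_from1 (fun n => (Cmod (b n))^2 / (1 - gamma)^(2*n) * rho^n))
      (Rbar_mult (k^2)
        (sum_from1 (fun n => (Cmod (a n))^2 / (1 - gamma)^(2*n) * rho^n))).
Proof.
  intros Hgam Hk Ha Hb Hdh Hdg _ Hgh z rho Hrho.
  set (c0 := RtoC (cgam gamma)).
  set (R0 := 1 / (1 - gamma)).
  assert (HR0 : 0 < R0) by (unfold R0; apply Rdiv_lt_0_compat; lra).
  assert (Ha' : forall z', Cmod (Cplus z' c0) < R0 -> climit (ps a (Cplus z' c0)) (h z'))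
    by (intros z' H; apply pseries_climit, Ha; exact H).
  assert (Hb' : forall z', Cmod (Cplus z' c0) < R0 -> climit (ps b (Cplus z' c0)) (g z'))
    by (intros z' H; apply pseries_climit, Hb; exact H).
  assert (Hexa : forall v, Cmod v < R0 -> exists l, climit (ps a v) l).
  { intros v Hv. exists (h (Cminus v c0)). specialize (Ha' (Cminus v c0)). rewrite shift_ok in Ha'. auto. }
  assert (Hexb : forall v, Cmod v < R0 -> exists l, climit (ps b v) l).
  { intros v Hv. exists (g (Cminus v c0)). specialize (Hb' (Cminus v c0)). rewrite shift_ok in Hb'. auto. }
  set (w := Cplus z c0).
  assert (Hrw : rho = (1 - gamma) * Cmod w).
  { unfold rho. replace (Cplus (Cmult (RtoC (1 - gamma)) z) (RtoC gamma)) with (Cmult (RtoC (1 - gamma)) w).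
    rewrite Cmod_mult, Cmod_R, Rabs_pos_eq by lra. auto.
    unfold w, c0, cgam. apply injective_projections; simpl; field; lra. }
  assert (Hw0 := Cmod_ge_0 w).
  assert (Hw : Cmod w < R0).
  { unfold R0. apply (Rmult_lt_reg_l (1 - gamma)). lra. field_simplify; lra. }
  set (al := fun n => Cmod (a n) ^ 2). set (be := fun n => Cmod (b n) ^ 2).
  set (d := fun n => k ^ 2 * al n - be n).
  set (X := R0 ^ 2).
  assert (HX : 0 < X) by (apply pow_lt; lra).
  set (K0 := k ^ 2 + 1).
  assert (HK0 : 0 <= K0) by (unfold K0; nra).
  assert (Hal : forall n, 0 <= al n) by (intros; apply pow_le, Cmod_ge_0).
  assert (Hbe : forall n, 0 <= be n) by (intros; apply pow_le, Cmod_ge_0).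
  assert (HpK : Rabs (k ^ 2) <= K0) by (rewrite Rabs_pos_eq; unfold K0; nra).
  assert (H1K : Rabs 1 <= K0) by (rewrite Rabs_R1; unfold K0; nra).
  assert (HmK : Rabs (-1) <= K0) by (rewrite Rabs_m1; unfold K0; nra).
  assert (H0K : Rabs 0 <= K0) by (rewrite Rabs_R0; unfold K0; nra).
  assert (Hn2 : forall n, 0 <= INR n * INR n <= (INR n + 1) ^ 2) by (intros n; pose proof (pos_INR n); split; nra).
  assert (Hn1 : forall n, 0 <= INR n <= (INR n + 1) ^ 2) by (intros n; pose proof (pos_INR n); split; nra).
  assert (Hn0 : forall n, 0 <= 1 <= (INR n + 1) ^ 2) by (intros n; pose proof (pos_INR n); split; nra).
  assert (RA2 : Rbar_le X (CV_radius (fun n => INR n * (INR n * al n)))).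
  { apply (radius_ok _ _ _ _ _ Hexa Hexb HK0 HR0). intros n. replace (INR n * (INR n * al n)) with ((INR n * INR n) * (1 * al n + 0 * be n)) by ring. apply bnd_helper; auto; try (apply pow_le; apply Cmod_ge_0). }
  assert (RB2 : Rbar_le X (CV_radius (fun n => INR n * (INR n * be n)))).
  { apply (radius_ok _ _ _ _ _ Hexa Hexb HK0 HR0). intros n. replace (INR n * (INR n * be n)) with ((INR n * INR n) * (0 * al n + 1 * be n)) by ring. apply bnd_helper; auto; try (apply pow_le; apply Cmod_ge_0). }
  assert (RA1 : Rbar_le X (CV_radius (fun n => INR n * al n))).
  { apply (radius_ok _ _ _ _ _ Hexa Hexb HK0 HR0). intros n. replace (INR n * al n) with (INR n * (1 * al n + 0 * be n)) by ring. apply bnd_helper; auto; try (apply pow_le; apply Cmod_ge_0). }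
  assert (RB1 : Rbar_le X (CV_radius (fun n => INR n * be n))).
  { apply (radius_ok _ _ _ _ _ Hexa Hexb HK0 HR0). intros n. replace (INR n * be n) with (INR n * (0 * al n + 1 * be n)) by ring. apply bnd_helper; auto; try (apply pow_le; apply Cmod_ge_0). }
  assert (RA0 : Rbar_le X (CV_radius al)).
  { apply (radius_ok _ _ _ _ _ Hexa Hexb HK0 HR0). intros n. replace (al n) with (1 * (1 * al n + 0 * be n)) by ring. apply bnd_helper; auto; try (apply pow_le; apply Cmod_ge_0). }
  assert (RB0 : Rbar_le X (CV_radius be)).
  { apply (radius_ok _ _ _ _ _ Hexa Hexb HK0 HR0). intros n. replace (be n) with (1 * (0 * al n + 1 * be n)) by ring. apply bnd_helper; auto; try (apply pow_le; apply Cmod_ge_0). }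
  set (a1 := fun n => INR n * d n).
  set (a2 := fun n => match n with O => 0 | S _ => d n end).
  assert (Ra1 : Rbar_le X (CV_radius a1)).
  { apply (radius_ok _ _ _ _ _ Hexa Hexb HK0 HR0). intros n. unfold a1, d. replace (INR n * (k ^ 2 * al n - be n)) with (INR n * (k ^ 2 * al n + (-1) * be n)) by ring. apply bnd_helper; auto; try (apply pow_le; apply Cmod_ge_0). }
  assert (Ra2 : Rbar_le X (CV_radius a2)).
  { apply (radius_ok _ _ _ _ _ Hexa Hexb HK0 HR0). intros n. unfold a2, d. destruct n.
    - replace 0 with (0 * (0 * al O + 0 * be O)) by ring. apply bnd_helper; auto; try (apply pow_le; apply Cmod_ge_0). simpl; split; lra.
    - replace (k ^ 2 * al (S n) - be (S n)) with (1 * (k ^ 2 * al (S n) + (-1) * be (S n))) by ring. apply bnd_helper; auto; try (apply pow_le; apply Cmod_ge_0). }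
  assert (Q : forall x, 0 < x < X -> 0 <= PSeries (fun n => INR n * a1 n) x).
  { intros x Hx. set (u := sqrt x).
    assert (Hu : 0 < u < R0).
    { unfold u. split. apply sqrt_lt_R0; lra. rewrite <- (sqrt_pow2 R0) by lra. apply sqrt_lt_1_alt. unfold X in Hx; lra. }
    assert (Hux : u ^ 2 = x) by (unfold u; apply pow2_sqrt; lra).
    assert (EA := exs _ X x RA2 ltac:(lra)). assert (EB := exs _ X x RB2 ltac:(lra)).
    assert (HSa : is_series (fun n => Cmod (Cmult (RtoC (INR n)) (a n)) ^ 2 * u ^ (2 * n)) (Series (fun n => INR n * (INR n * al n) * x ^ n))).
    { eapply is_series_ext; [|apply Series_correct, EA]. intros n. cbv beta. match goal with |- ?x = ?y => change (@eq R x y) end.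
      rewrite Cmod_mult, Cmod_R, Rabs_pos_eq by apply pos_INR. rewrite pow_mult, Hux. unfold al. ring. }
    assert (HSb : is_series (fun n => Cmod (Cmult (RtoC (INR n)) (b n)) ^ 2 * u ^ (2 * n)) (Series (fun n => INR n * (INR n * be n) * x ^ n))).
    { eapply is_series_ext; [|apply Series_correct, EB]. intros n. cbv beta. match goal with |- ?x = ?y => change (@eq R x y) end.
      rewrite Cmod_mult, Cmod_R, Rabs_pos_eq by apply pos_INR. rewrite pow_mult, Hux. unfold be. ring. }
    pose proof (core a b h g h' g' R0 c0 k u _ _ ltac:(lra) Hu Ha' Hb' Hdh Hdg Hgh HSa HSb) as Hc.
    unfold PSeries. rewrite (Series_ext _ (fun n => k ^ 2 * (INR n * (INR n * al n) * x ^ n) - INR n * (INR n * be n) * x ^ n)).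
    2:{ intros n. unfold a1, d. ring. }
    rewrite Series_minus, Series_scal_l; auto. lra.
    apply (@ex_series_scal_l R_AbsRing R_NormedModule (k ^ 2) (fun n => INR n * (INR n * al n) * x ^ n)). auto. }
  assert (M1 := mono a1 X HX Ra1 ltac:(unfold a1; simpl; ring) Q).
  assert (M2 : forall x, 0 <= x < X -> 0 <= PSeries a2 x).
  { apply mono; auto. intros x Hx. rewrite (PSeries_ext _ a1). apply M1; lra.
    intros [|n]; unfold a1, a2; simpl; ring. }
  split.
  - set (x1 := Cmod w ^ 2).
    assert (Hx1 : 0 <= x1 < X). { unfold x1, X. split. apply pow_le; lra. simpl; nra. }
    rewrite (sf_ext _ (fun n => INR n * be n * x1 ^ n)).
    2:{ intros n. unfold be, x1. rewrite Hrw, <- pow_mult, Rpow_mult_distr. field. apply pow_nonzero; lra. }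
    rewrite (sf_ext (fun n => INR n * Cmod (a n) ^ 2 / (1 - gamma) ^ (2 * n) * rho ^ (2 * n)) (fun n => INR n * al n * x1 ^ n)).
    2:{ intros n. unfold al, x1. rewrite Hrw, <- pow_mult, Rpow_mult_distr. field. apply pow_nonzero; lra. }
    assert (EA := exs _ X x1 RA1 Hx1). assert (EB := exs _ X x1 RB1 Hx1).
    rewrite !sf_val by auto. simpl.
    pose proof (M1 x1 Hx1) as P1. unfold PSeries in P1.
    rewrite (Series_ext _ (fun n => k ^ 2 * (INR n * al n * x1 ^ n) - INR n * be n * x1 ^ n)) in P1.
    2:{ intros n. unfold a1, d. ring. }
    rewrite Series_minus, Series_scal_l in P1; auto.
    2:{ apply (@ex_series_scal_l R_AbsRing R_NormedModule (k ^ 2) (fun n => INR n * al n * x1 ^ n)). auto. }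
    rewrite (Series_incr_1 (fun n => INR n * al n * x1 ^ n)), (Series_incr_1 (fun n => INR n * be n * x1 ^ n)) in P1 by auto.
    simpl in P1. lra.
  - set (x2 := Cmod w / (1 - gamma)).
    assert (Ex2 : x2 = Cmod w * R0) by (unfold x2, R0; field; lra).
    assert (Hx2 : 0 <= x2 < X).
    { rewrite Ex2. unfold X. split. apply Rmult_le_pos; lra. simpl. nra. }
    assert (Hpw : forall n, rho ^ n / (1 - gamma) ^ (2 * n) = x2 ^ n).
    { intros n. rewrite Hrw. unfold x2, Rdiv. rewrite !Rpow_mult_distr, pow_inv, pow_mult.
      assert ((1 - gamma) ^ n <> 0) by (apply pow_nonzero; lra).
      replace ((1 - gamma) ^ 2) with ((1 - gamma) * (1 - gamma)) by ring. rewrite Rpow_mult_distr.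
      field. auto. }
    rewrite (sf_ext _ (fun n => be n * x2 ^ n)).
    2:{ intros n. unfold be. rewrite <- Hpw. unfold Rdiv. ring. }
    rewrite (sf_ext (fun n => Cmod (a n) ^ 2 / (1 - gamma) ^ (2 * n) * rho ^ n) (fun n => al n * x2 ^ n)).
    2:{ intros n. unfold al. rewrite <- Hpw. unfold Rdiv. ring. }
    assert (EA := exs _ X x2 RA0 Hx2). assert (EB := exs _ X x2 RB0 Hx2).
    assert (E2 := exs _ X x2 Ra2 Hx2).
    rewrite !sf_val by auto. simpl.
    pose proof (M2 x2 Hx2) as P2. unfold PSeries in P2.
    rewrite Series_incr_1 in P2 by auto. simpl in P2. rewrite Rmult_0_l, Rplus_0_l in P2.
    rewrite (Series_ext _ (fun n => k ^ 2 * (al (S n) * x2 ^ (S n)) - be (S n) * x2 ^ (S n))) in P2.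
    2:{ intros n. unfold a2, d. simpl. ring. }
    apply ex_series_incr_1 in EA. apply ex_series_incr_1 in EB.
    rewrite Series_minus, Series_scal_l in P2; auto.
    2:{ apply (@ex_series_scal_l R_AbsRing R_NormedModule (k ^ 2) (fun n => al (S n) * x2 ^ (S n))). auto. }
    simpl in P2. lra.
Qed.
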